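(* There exists a constant $r_{m,1}>0$ depending only on $m$ such that for $P$-a.e. $\omega$ there exists $N_2(\omega)\in\mathbb N$ such that for every $n>N_2(\omega)$, $C_{Q_n(\omega)}\subset[-r_{m,1},r_{m,1}]$.
   Context: Fix $m>1/2$. Let $c_m:=\left(\int_{\mathbb R}(1+x^2)^{-m}dx\right)^{-1}$ and let $\nu_m(dx):=c_m(1+x^2)^{-m}dx$ (the Pearson Type VII law $\mathrm{PVII}_m(0,1)$). Let $(X_n)_{n\ge1}$ be i.i.d. random variables on $(\Omega,\mathcal F,P)$ with law $\nu_m$. For $t\in\mathbb R$ let $L_n(t):=\frac1n\sum_{i=1}^n\log(1+(X_i-t)^2)$. Let $Q_n(\omega):=\frac1n\sum_{i=1}^n\delta_{X_i(\omega)}$ be the empirical distribution and $C_{Q_n(\omega)}:=\{t\in\mathbb R: L_n(t)(\omega)=\min_{s\in\mathbb R}L_n(s)(\omega)\}$ the set of minimizers of $L_n(\cdot)(\omega)$ (the Fréchet mean set). *)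

(* Defs.v *)
From HB Require Import structures.
From mathcomp Require Import all_boot all_order all_algebra.
From mathcomp Require Import all_classical all_reals all_analysis.
Set Implicit Arguments. Unset Strict Implicit. Unset Printing Implicit Defensive.
Import Order.TTheory GRing.Theory Num.Theory.
Import numFieldNormedType.Exports.
Local Open Scope classical_set_scope.
Local Open Scope ring_scope.

Section defs.
Variable R : realType.

Definition pvii_density (m x : R) : R := powR (1 + x ^+ 2) (- m).

Definition pvii_const (m : R) : R :=
  (fine (\int[@lebesgue_measure R]_x (pvii_density m x)%:E))^-1.

Definition pvii_law (m : R) (A : set R) : \bar R :=
  ((pvii_const m)%:E * \int[@lebesgue_measure R]_(x in A) (pvii_density m x)%:E)%E.

Definition mutually_independent d (T : measurableType d)
    (P : probability T R) (X : nat -> T -> R) : Prop :=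
  forall (s : seq nat) (A : nat -> set R), uniq s ->
    (forall i, measurable (A i)) ->
    P (\big[setI/setT]_(i <- s) (X i @^-1` A i)) =
    (\prod_(i <- s) P (X i @^-1` A i))%E.

(* L_n(t)(w) = 1/n sum_{i=1}^n log(1+(X_i(w)-t)^2); X_1..X_n are X 0 .. X (n-1) *)
Definition emp_loss T (X : nat -> T -> R) (n : nat) (t : R) (w : T) : R :=
  n%:R^-1 * \sum_(i < n) ln (1 + (X i w - t) ^+ 2).

Definition frechet_mean_set T (X : nat -> T -> R) (n : nat) (w : T) : set R :=
  [set t | forall s, emp_loss X n t w <= emp_loss X n s w].

End defs.

(* Main.v *)
Require Import Defs.
From HB Require Import structures.
From mathcomp Require Import all_boot all_order all_algebra.
From mathcomp Require Import all_classical all_reals all_analysis.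
From mathcomp Require Import ring lra.
Import Order.TTheory GRing.Theory Num.Theory.
Import numFieldNormedType.Exports.
Local Open Scope classical_set_scope.
Local Open Scope ring_scope.

Section det.
Variable R : realType.

Lemma pos1 (u : R) : 0 < 1 + u ^+ 2.
Proof. by have := sqr_ge0 u; lra. Qed.

Lemma ln_le2 (a b c d : R) : 0 < a -> 0 < b -> 0 < c -> 0 < d ->
  a * b <= c * d -> ln a + ln b <= ln c + ln d.
Proof.
move=> a0 b0 c0 d0 h.
rewrite -!lnM ?posrE //.
by rewrite ler_ln ?posrE ?mulr_gt0.
Qed.

Lemma good_term (K x t : R) : 0 <= K -> `|x| <= K -> 2 * K <= `|t| ->
  ln (1 + x ^+ 2) + ln (1 + t ^+ 2) <= ln (1 + (x - t) ^+ 2) + ln (8 * (1 + K ^+ 2)).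
Proof.
move=> K0 xK tK.
have h1 : `|t| / 2 <= `|x - t|.
  rewrite (distrC x t); apply: le_trans (ler_dist_dist t x).
  apply: le_trans (ler_norm _). have := normr_ge0 t; lra.
have h2 : t ^+ 2 / 4 <= (x - t) ^+ 2.
  rewrite -(real_normK (num_real (x - t))) -(real_normK (num_real t)).
  have := normr_ge0 t; nra.
have h3 : x ^+ 2 <= K ^+ 2.
  rewrite -(real_normK (num_real x)); have := normr_ge0 x; nra.
apply: ln_le2; rewrite ?pos1 ?mulr_gt0 ?pos1 //.
- have := sqr_ge0 x; have := sqr_ge0 t; have := sqr_ge0 K; nra.
Qed.

Lemma bad_term (K x t : R) : 0 <= K ->
  ln (1 + x ^+ 2) <= ln (1 + (x - t) ^+ 2) + ln ((1 + t ^+ 2) * (8 * (1 + K ^+ 2))).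
Proof.
move=> K0.
rewrite -[ln (1 + x ^+ 2)]addr0 -ln1.
apply: ln_le2.
- exact: pos1.
- by [].
- exact: pos1.
- by rewrite !mulr_gt0 ?pos1.
- rewrite mulr1.
  have := sqr_ge0 (x - t); have := sqr_ge0 t; have := sqr_ge0 K.
  have := sqr_ge0 (x - t - t); have := sqr_ge0 ((x-t) * t).
  nra.
Qed.
Lemma keyl (L C nn s : R) : 0 <= L * (nn - 4 * s) -> 0 <= nn * (L - 2 * C - 1) -> 1 <= nn ->
  0 < (L - C) * nn - 2 * L * s.
Proof. move=> h1 h2 hn. nra. Qed.
Lemma det_bound (K t : R) (n : nat) (x : 'I_n -> R) : 0 <= K -> (0 < n)%N ->
  (4 * #|[set i | (K < `|x i|)%R]%SET| <= n)%N ->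
  expR (2 * ln (8 * (1 + K ^+ 2)) + 1) + 2 * K < `|t| ->
  \sum_i ln (1 + x i ^+ 2) < \sum_i ln (1 + (x i - t) ^+ 2).
Proof.
move=> K0 n0 hS ht.
set C := ln (8 * (1 + K ^+ 2)).
set L := ln (1 + t ^+ 2).
set S := [set i | (K < `|x i|)%R]%SET.
have C0 : 0 <= C by rewrite ln_ge0 //; have := sqr_ge0 K; lra.
have e1 := expR_ge1Dx (2 * C + 1).
have LC : 2 * C + 1 <= L.
  rewrite /L -{1}(expRK (2 * C + 1)) ler_ln ?posrE ?pos1 ?expR_gt0 //.
  rewrite -(real_normK (num_real t)).
  have u1 : 1 <= `|t| by lra.
  have uu : `|t| <= `|t| ^+ 2.
    by rewrite expr2; move: u1; set u := `|t|; clear; nra.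
  lra.
have tK : 2 * K <= `|t| by have := expR_ge0 (2 * C + 1); lra.
have term : forall i, ln (1 + x i ^+ 2) + (L - C) - (if i \in S then 2 * L else 0)
    <= ln (1 + (x i - t) ^+ 2).
  move=> i; case: ifP => iS.
    have := bad_term K (x i) t K0.
    rewrite lnM ?posrE ?pos1 ?mulr_gt0 ?pos1 // -/C -/L; lra.
  have xK : `|x i| <= K.
    by move: iS; rewrite /S inE => /negbT; rewrite -leNgt.
  have := good_term K (x i) t K0 xK tK; rewrite -/C -/L; lra.
apply: lt_le_trans (ler_sum _ (fun i _ => term i)).
rewrite sumrB big_split /= sumr_const card_ord -big_mkcond /= sumr_const.
have hs : ((4 * #|S|)%:R <= n%:R :> R) by rewrite ler_nat.
rewrite natrM in hs.
have hn : (1 <= n%:R :> R) by rewrite ler1n.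
rewrite -[_ *+ n]mulr_natr -[_ *+ #|S|]mulr_natr.
move: hs hn LC C0; set s := #|S|%:R; set nn := n%:R => hs hn LC C0.
have s0 : 0 <= s by rewrite ler0n.
have h1 : 0 <= L * (nn - 4 * s) by rewrite mulr_ge0 //; lra.
have h2 : 0 <= nn * (L - 2 * C - 1) by rewrite mulr_ge0 //; lra.
have key := @keyl L C nn s h1 h2 hn.
lra.

Qed.
End det.


Section prob.
Variable R : realType.

Lemma in_bigsetI (T : Type) (I : eqType) (s : seq I) (F : I -> set T) w :
  (forall i, i \in s -> F i w) -> (\big[setI/setT]_(i <- s) F i) w.
Proof.
elim: s => [|a s IH] h; rewrite ?big_nil ?big_cons //; split.
  by apply: h; rewrite mem_head.
by apply: IH => i hi; apply: h; rewrite in_cons hi orbT.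
Qed.

Lemma bigsetU_le d (T : measurableType d) (mu : {measure set T -> \bar R})
    (I : Type) (s : seq I) (P : pred I) (F : I -> set T) :
  (forall i, measurable (F i)) ->
  (mu (\big[setU/set0]_(i <- s | P i) F i) <= \sum_(i <- s | P i) mu (F i))%E.
Proof.
move=> mF; elim: s => [|a s IH]; first by rewrite !big_nil measure0.
rewrite !big_cons; case: (P a) => //=.
have mB : measurable (\big[setU/set0]_(j <- s | P j) F j) by apply: bigsetU_measurable.
have h := measureU2 mu (mF a) mB.
apply: le_trans h _.
exact: leeD.
Qed.

Lemma prod_le (I : Type) (s : seq I) (f : I -> \bar R) (e : R) : 0 <= e ->
  (forall i, (0 <= f i)%E /\ (f i <= e%:E)%E) ->
  (\prod_(i <- s) f i <= (e ^+ size s)%:E)%E.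
Proof.
move=> e0 hf; elim: s => [|a s IH]; first by rewrite big_nil expr0.
rewrite big_cons /= exprS EFinM.
have [h1 h2] := hf a.
apply: lee_pmul => //.
by apply: prode_ge0 => i _; case: (hf i).
Qed.

End prob.


Lemma mB (R : realType) (K : R) : measurable [set x : R | K < `|x|].
Proof.
have := @measurable_realfun.normr_measurable R setT measurableT _ (measurable_itv `]K, +oo[).
rewrite setTI; congr measurable; apply/seteqP; split => x /=;
  by rewrite in_itv /= andbT.
Qed.

Lemma existsK (R : realType) (m : R) :
  (exists d (T : measurableType d) (P : probability T R) (X : T -> R),
     measurable_fun setT X /\
     forall A, measurable A -> P (X @^-1` A) = pvii_law m A) ->
  exists2 K : R, 0 <= K & (pvii_law m [set x : R | (K < `|x|)%R] <= ((2^-1)^+8)%:E)%E.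
Proof.
move=> [d [T [P [X [mX law]]]]].
pose F k := X @^-1` [set x : R | k%:R < `|x|].
have mF k : measurable (F k).
  by have := mX measurableT _ (@mB R k%:R : measurable [set x : R | k%:R < `|x|]); rewrite setTI.
have cF : (P \o F) @ \oo --> P (\bigcap_n F n).
  apply: nonincreasing_cvg_mu => //.
  - by rewrite (le_lt_trans (probability_le1 _ _)) ?ltry.
  - exact: bigcapT_measurable.
  - move=> a b ab; rewrite subsetEset => x /=; apply: le_lt_trans.
    by rewrite ler_nat.
have F0 : \bigcap_n F n = set0.
  apply/seteqP; split => // x /= h.
  have := h (Num.trunc `|X x|).+1 I; rewrite /F /=.
  by rewrite ltNge (ltW (truncnS_gt _)).
rewrite F0 measure0 in cF.
have cF' : (fine \o (P \o F)) x @[x --> \oo] --> (0:R) by apply: fine_cvg.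
have e0 : (0 : R) < (2^-1)^+8 by rewrite exprn_gt0.
have [N _ hN] := cvgr_lt _ cF' _ e0.
exists N%:R => //.
have := hN N (leqnn N); rewrite /= => hlt.
rewrite -law; last exact: mB.
have fin : P (F N) \is a fin_num.
  by rewrite ge0_fin_numE ?measure_ge0 // (le_lt_trans (probability_le1 _ _)) ?ltry.
by rewrite -(fineK fin) lee_fin ltW.
Qed.


Lemma geo_fin (R : realType) : (\sum_(n <oo) ((2^-1 : R)^+n.+1)%:E < +oo)%E.
Proof.
have H := @cvg_geometric_eseries_half R 1 0.
have eq : (fun k => (1 / (2 ^ (k + 0.+1))%:R)%:E) = (fun n => ((2^-1 : R)^+n.+1)%:E).
  by apply/funext => k; rewrite natrX addn1 div1r exprVn.
rewrite eq in H.
rewrite (cvg_lim _ H) //.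
exact: ltry.
Qed.

Theorem lemma2p2 (R : realType) (m : R) (hm : 1 / 2 < m) :
  exists2 r : R, 0 < r &
  forall (d : measure_display) (T : measurableType d) (P : probability T R)
    (X : nat -> T -> R),
    (forall i, measurable_fun setT (X i)) ->
    (forall i (A : set R), measurable A -> P (X i @^-1` A) = pvii_law m A) ->
    mutually_independent P X ->
    {ae P, forall w, exists N : nat, forall n : nat, (N < n)%N ->
       frechet_mean_set X n w `<=` `[- r, r]}.
Proof.
pose H0 := exists d (T : measurableType d) (P : probability T R) (X : T -> R),
     measurable_fun setT X /\
     forall A, measurable A -> P (X @^-1` A) = pvii_law m A.
have [h0|nh0] := pselect H0; last first.
  exists 1 => // d T P X mX hlaw _; exfalso; apply: nh0.
  by exists d, T, P, (X 0%N); split => //; exact: hlaw.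
have [K K0 hK] := @existsK R m h0.
exists (expR (2 * ln (8 * (1 + K ^+ 2)) + 1) + 2 * K).
  by rewrite ltr_pwDl ?mulr_ge0 ?expR_gt0.
move=> d T P X mX hlaw hind.
set e : R := (2^-1)^+8.
set B := [set x : R | (K < `|x|)%R].
have mB' : measurable B := @mB R K.
have pB i : (P (X i @^-1` B) <= e%:E)%E by rewrite hlaw.
have mXB i : measurable (X i @^-1` B).
  by have := mX i measurableT _ mB'; rewrite setTI.
pose E n := \big[setU/set0]_(S : {set 'I_n} | (n.+1 <= 4 * #|S|)%N)
   \big[setI/setT]_(j <- [seq val i | i <- enum S]) (X j @^-1` B).
have mE n : measurable (E n).
  by apply: bigsetU_measurable => S _; apply: bigsetI_measurable => j _.
have e0 : (0 : R) <= e by rewrite exprn_ge0.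
have PE n : (P (E n) <= ((2^-1)^+n.+1)%:E)%E.
  have mI (S : {set 'I_n}) : measurable
      (\big[setI/setT]_(j <- [seq val i | i <- enum S]) (X j @^-1` B)).
    by apply: bigsetI_measurable => j _.
  rewrite /E.
  apply: (le_trans (@bigsetU_le R d T P _ _ _ _ mI)).
  apply: (@le_trans _ _ (\sum_(S : {set 'I_n} | (n.+1 <= 4 * #|S|)%N)
            ((2^-1 : R)^+(n.+1 + n.+1))%:E)%E).
    apply: lee_sum => S hS.
    have us : uniq [seq val i | i <- enum S].
      by rewrite (map_inj_uniq val_inj) enum_uniq.
    have h : P (\big[setI/setT]_(j <- [seq val i | i <- enum S]) (X j @^-1` B))
       = (\prod_(j <- [seq val i | i <- enum S]) P (X j @^-1` B))%E
       := hind [seq val i | i <- enum S] (fun=> B) us (fun=> mB').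
    apply: (@le_trans _ _ (\prod_(j <- [seq val i | i <- enum S]) P (X j @^-1` B))%E).
      by rewrite -h; exact: lexx.
    apply: le_trans (@prod_le R nat _ (fun i => P (X i @^-1` B)) e e0
       (fun i => conj (measure_ge0 _ _) (pB i))) _.
    have hh : e ^+ size [seq val i | i <- enum S] <= (2^-1)^+(n.+1 + n.+1).
      rewrite size_map -cardE /e -exprM.
      apply: ler_wiXn2l; first by rewrite invr_ge0.
        by rewrite invf_le1 // ler1n.
      apply: leq_trans (leq_add hS hS) _; rewrite -mulnDl; exact: leqnn.
    by move: hh; rewrite -lee_fin => hh; exact: hh.
  rewrite big_mkcond /=.
  apply: (@le_trans _ _ (\sum_(S : {set 'I_n}) ((2^-1 : R)^+(n.+1 + n.+1))%:E)%E).
    by apply: lee_sum => S _; case: ifP => _ //.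
  rewrite sumEFin lee_fin sumr_const.
  have cS : #|{set 'I_n}| = (2 ^ n)%N.
    by rewrite -cardsT -powersetT card_powerset cardsT card_ord.
  rewrite [#|_|]cS.
  rewrite -[_ *+ (2 ^ n)%N]mulr_natr exprD natrX -mulrA ler_piMr ?exprn_ge0 ?invr_ge0 //.
  rewrite exprSr mulrAC -exprMn mulVf ?pnatr_eq0 // expr1n mul1r.
  by rewrite invf_le1 // ler1n.
have sumE : (\sum_(n <oo) P (E n) < +oo)%E.
  apply: le_lt_trans (geo_fin R).
  apply: (@lee_nneseries R (fun n => P (E n)) (fun n => ((2^-1 : R)^+n.+1)%:E)
     (fun _ => true) 0%N) => //.
have Z0 := @lim_sup_set_cvg0 _ _ _ P _ mE sumE.
exists (lim_sup_set E); split => //.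
  by apply: bigcapT_measurable => n; apply: bigcup_measurable => j _.
move=> w /= nQ; apply: contrapT => nZ; apply: nQ.
have [N hN] : exists N, forall j, (N <= j)%N -> ~ E j w.
  apply: contrapT => h; apply: nZ => n _.
  apply: contrapT => h2; apply: h; exists n => j nj Ej; apply: h2; exists j => //.
exists N => n Nn t Ht.
rewrite /= in_itv /= -ler_norml leNgt; apply/negP => hr.
have n0 : (0 < n)%N by apply: leq_ltn_trans Nn.
have hS : (4 * #|[set i : 'I_n | (K < `|X i w|)%R]%SET| <= n)%N.
  rewrite leqNgt; apply/negP => hlt; apply: (hN n (ltnW Nn)).
  rewrite /E (bigD1 [set i : 'I_n | (K < `|X i w|)%R]%SET) //=; left.
  apply: in_bigsetI => j /mapP [i]; rewrite mem_enum inE => hi ->.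
  exact: hi.
have h2 := @det_bound R K t n (fun i : 'I_n => X i w) K0 n0 hS hr.
have := Ht 0; rewrite /emp_loss.
have eq0 : \sum_(i < n) ln (1 + (X i w - 0) ^+ 2) = \sum_(i < n) ln (1 + X i w ^+ 2).
  by apply: eq_bigr => i _; rewrite subr0.
rewrite eq0.
rewrite ler_pM2l ?invr_gt0 ?ltr0n // => h1.
by have := lt_le_trans h2 h1; rewrite ltxx.
Qed.
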